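(* If $T$ is a tournament and $T$ is a subdigraph of an oriented graph $D$, then for any minimum hull set $S$ of $D$ in the two-path convexity, $|S\cap V(T)|\leq 2$.
   Context: A tournament is an orientation of a complete graph; an oriented graph is an orientation of a finite simple graph. The two-path interval function on $D$ is $I_{P_3}(u,v)=\{u,v\}$ together with all vertices $w$ with $(u,w),(w,v)\in A(D)$ or $(v,w),(w,u)\in A(D)$. For $S\subseteq V(D)$, $I_{P_3}(S)=\bigcup_{u,v\in S}I_{P_3}(u,v)$; $C$ is convex if $I_{P_3}(C)=C$; the convex hull of $S$ is the smallest convex set containing $S$; a hull set is a set whose convex hull is $V(D)$, and a minimum hull set is one of minimum size. *)

(* Defs.v *)
(* A digraph on a finite vertex type V is given by its arc
   relation a : rel V ((u,v) is an arc iff a u v). *)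
From mathcomp Require Import all_boot.
Set Implicit Arguments. Unset Strict Implicit. Unset Printing Implicit Defensive.

Definition oriented (V : finType) (a : rel V) : Prop :=
  (forall u, ~~ a u u) /\ (forall u v, a u v -> ~~ a v u).

(* T = (W, b) is a subdigraph of D = (V, a): b only uses vertices of W and
   every arc of b is an arc of a. *)
Definition subdigraph (V : finType) (W : {set V}) (b a : rel V) : Prop :=
  (forall u v, b u v -> (u \in W) && (v \in W)) /\ (forall u v, b u v -> a u v).

Definition tournament (V : finType) (W : {set V}) (b : rel V) : Prop :=
  oriented b /\ (forall u v, u \in W -> v \in W -> u != v -> b u v || b v u).

Definition IP3 (V : finType) (a : rel V) (u v : V) : {set V} :=
  [set w | (w == u) || (w == v) || (a u w && a w v) || (a v w && a w u)].

Definition IP3set (V : finType) (a : rel V) (S : {set V}) : {set V} :=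
  \bigcup_(u in S) \bigcup_(v in S) IP3 a u v.

Definition convex (V : finType) (a : rel V) (C : {set V}) : bool :=
  IP3set a C == C.

Definition hull (V : finType) (a : rel V) (S : {set V}) : {set V} :=
  \bigcap_(C : {set V} | convex a C && (S \subset C)) C.

Definition hull_set (V : finType) (a : rel V) (S : {set V}) : bool :=
  hull a S == [set: V].

Definition min_hull_set (V : finType) (a : rel V) (S : {set V}) : Prop :=
  hull_set a S /\ (forall S' : {set V}, hull_set a S' -> #|S| <= #|S'|).

(* Main.v *)
Require Import Defs.
From mathcomp Require Import all_boot.

Lemma hull_del (V : finType) (a : rel V) (S : {set V}) (x y z : V) :
  x \in S -> z \in S -> x != y -> z != y -> y \in IP3 a x z ->
  hull a (S :\ y) = hull a S.
Proof.
move=> xS zS xy zy yI; rewrite /hull; apply: eq_bigl => C.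
case cC: (convex a C) => //=.
apply/idP/idP; last first.
  by move=> sub; apply: subset_trans sub; apply: subsetDl.
move=> sub; apply/subsetP => w wS.
case: (eqVneq w y) => [->|wy]; last first.
  by apply: (subsetP sub); rewrite !inE wy.
have xC : x \in C by apply: (subsetP sub); rewrite !inE xy.
have zC : z \in C by apply: (subsetP sub); rewrite !inE zy.
rewrite -(eqP cC); apply/bigcupP; exists x => //; apply/bigcupP; exists z => //.
Qed.

Lemma three (V : finType) (a : rel V) (x y z : V) :
  a x y || a y x -> a y z || a z y -> a x z || a z x ->
  [\/ y \in IP3 a x z, x \in IP3 a y z | z \in IP3 a x y].
Proof.
rewrite /IP3 => h1 h2 h3.
case/orP: h1 => h1; case/orP: h2 => h2; case/orP: h3 => h3;
  first [ by apply: Or31; rewrite inE ?h1 ?h2 ?h3 /= ?orbT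
        | by apply: Or32; rewrite inE ?h1 ?h2 ?h3 /= ?orbT
        | by apply: Or33; rewrite inE ?h1 ?h2 ?h3 /= ?orbT ].
Qed.

Theorem corollary3 (V : finType) (a : rel V) (W : {set V}) (b : rel V)
  (S : {set V}) :
  oriented a -> subdigraph W b a -> tournament W b ->
  min_hull_set a S -> #|S :&: W| <= 2.
Proof.
move=> _ [_ sba] [_ tb] [hS minS].
rewrite leqNgt; apply/negP => big.
have del : forall x y z, x \in S -> z \in S -> x != y -> z != y ->
    y \in S -> y \in IP3 a x z -> False.
  move=> x y z xS zS xy zy yS yI.
  have := minS (S :\ y); rewrite /hull_set (@hull_del _ _ _ _ _ _ xS zS xy zy yI) (eqP hS) eqxx => /(_ isT).
  by rewrite (cardsD1 y S) yS ltnn.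
have ab : forall u v, u \in S :&: W -> v \in S :&: W -> u != v -> a u v || a v u.
  move=> u v; rewrite !inE => /andP[_ uW] /andP[_ vW] uv.
  by case/orP: (tb u v uW vW uv) => h; rewrite (sba _ _ h) ?orbT.
set A := S :&: W in big ab.
have : 0 < #|A| by apply: leq_ltn_trans big.
rewrite card_gt0 => /set0Pn [x xA].
have : 0 < #|A :\ x|.
  by move: big; rewrite (cardsD1 x A) xA add1n ltnS; apply: leq_ltn_trans.
rewrite card_gt0 => /set0Pn [y]; rewrite in_setD1 => /andP[yx yA].
have : 0 < #|A :\ x :\ y|.
  move: big; rewrite (cardsD1 x A) xA (cardsD1 y (A :\ x)) in_setD1 yx yA /=.
  by rewrite !add1n !ltnS.
rewrite card_gt0 => /set0Pn [z]; rewrite !in_setD1 => /and3P[zy zx zA].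
have inS : forall u, u \in A -> u \in S by move=> u; rewrite inE => /andP[].
have xy : x != y by rewrite eq_sym.
have yz : y != z by rewrite eq_sym.
have xz : x != z by rewrite eq_sym.
case: (@three _ a x y z (ab _ _ xA yA xy) (ab _ _ yA zA yz) (ab _ _ xA zA xz)).
- by apply: (del x y z); rewrite ?inS // eq_sym.
- by apply: (del y x z); rewrite ?inS // eq_sym.
- by apply: (del x z y); rewrite ?inS // eq_sym.
Qed.
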